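(* Let $U\colon[0,1]^2\to[0,1]$ be a uninorm with neutral element $e\in(0,1)$, $U\in\mathcal U$. If for some $x_1<x_2$ in $[0,1]$ both functions $u_{x_1}$ and $u_{x_2}$ are non-continuous at the same point $y\in[0,1]$, then $y$ is an idempotent element of $U$.
   Context: A uninorm is a commutative, associative binary operation on $[0,1]$, non-decreasing in each variable, with a neutral element $e$. Underlying t-norm $T_U(x,y)=U(ex,ey)/e$, underlying t-conorm $C_U(x,y)=(U(e+(1-e)x,e+(1-e)y)-e)/(1-e)$; $\mathcal U$ is the class of uninorms for which both are continuous. For $x\in[0,1]$, $u_x\colon[0,1]\to[0,1]$ is $u_x(z)=U(x,z)$. An idempotent element is $x$ with $U(x,x)=x$. *)

(* Defs.v *)
From Stdlib Require Import Reals Lra.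
Open Scope R_scope.

Definition in01 (x : R) : Prop := 0 <= x <= 1.

(* A uninorm on [0,1] with neutral element e, represented by a total
   function R -> R -> R whose behaviour is only constrained on [0,1]^2. *)
Definition uninorm (U : R -> R -> R) (e : R) : Prop :=
  in01 e /\
  (forall x y, in01 x -> in01 y -> in01 (U x y)) /\
  (forall x y, in01 x -> in01 y -> U x y = U y x) /\
  (forall x y z, in01 x -> in01 y -> in01 z -> U x (U y z) = U (U x y) z) /\
  (forall x x' y, in01 x -> in01 x' -> in01 y -> x <= x' -> U x y <= U x' y) /\
  (forall x, in01 x -> U e x = x).

Definition continuous_on_unit_square (f : R -> R -> R) : Prop :=
  forall x0 y0, in01 x0 -> in01 y0 ->
  forall eps, eps > 0 -> exists delta, delta > 0 /\
    forall x y, in01 x -> in01 y -> Rabs (x - x0) < delta -> Rabs (y - y0) < delta ->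
      Rabs (f x y - f x0 y0) < eps.

Definition continuous_at_in01 (f : R -> R) (y0 : R) : Prop :=
  forall eps, eps > 0 -> exists delta, delta > 0 /\
    forall z, in01 z -> Rabs (z - y0) < delta -> Rabs (f z - f y0) < eps.

Definition underlying_tnorm (U : R -> R -> R) (e : R) : R -> R -> R :=
  fun x y => U (e * x) (e * y) / e.

Definition underlying_tconorm (U : R -> R -> R) (e : R) : R -> R -> R :=
  fun x y => (U (e + (1 - e) * x) (e + (1 - e) * y) - e) / (1 - e).

Definition in_class_U (U : R -> R -> R) (e : R) : Prop :=
  continuous_on_unit_square (underlying_tnorm U e) /\
  continuous_on_unit_square (underlying_tconorm U e).

Definition u_ (U : R -> R -> R) (x : R) : R -> R := fun z => U x z.

Definition idempotent (U : R -> R -> R) (x : R) : Prop := U x x = x.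

(* Main.v *)
Require Import Defs.
From Stdlib Require Import Reals Lra.
Open Scope R_scope.


Definition cont_rel (f : R -> R) (a b x0 : R) : Prop :=
  forall eps, eps > 0 -> exists d, d > 0 /\
    forall x, a <= x <= b -> Rabs (x - x0) < d -> Rabs (f x - f x0) < eps.

Definition Tcont (U : R -> R -> R) (e : R) : Prop :=
  forall a w0, 0 <= a <= e -> 0 <= w0 <= e -> cont_rel (fun w => U a w) 0 e w0.
Definition Ccont (U : R -> R -> R) (e : R) : Prop :=
  forall a s0, e <= a <= 1 -> e <= s0 <= 1 -> cont_rel (fun s => U a s) e 1 s0.
Definition Hyp (U : R -> R -> R) (e : R) : Prop :=
  uninorm U e /\ 0 < e < 1 /\ Tcont U e /\ Ccont U e.

Lemma abs_lt (x a : R) : -a < x < a -> Rabs x < a.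
Proof. intros [H1 H2]; apply Rabs_def1; lra. Qed.
Lemma abs_lt_inv (x a : R) : Rabs x < a -> -a < x < a.
Proof. intro H; destruct (Rabs_def2 _ _ H); lra. Qed.

Definition clamp (a b x : R) := Rmin b (Rmax a x).

Lemma clamp_in a b x : a <= b -> a <= clamp a b x <= b.
Proof. intros; unfold clamp, Rmin, Rmax; repeat destruct Rle_dec; lra. Qed.
Lemma clamp_id a b x : a <= x <= b -> clamp a b x = x.
Proof. intros; unfold clamp, Rmin, Rmax; repeat destruct Rle_dec; lra. Qed.
Lemma clamp_lip a b x y : a <= b -> Rabs (clamp a b x - clamp a b y) <= Rabs (x - y).
Proof. intros; unfold clamp, Rmin, Rmax; repeat destruct Rle_dec; split_Rabs; lra. Qed.

Lemma IVT_rel f a b v : a <= b -> (forall x0, a <= x0 <= b -> cont_rel f a b x0) ->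
  f a <= v <= f b -> exists c, a <= c <= b /\ f c = v.
Proof.
  intros Hab Hc Hv.
  set (g := fun x => f (clamp a b x) - v).
  assert (Hg : continuity g).
  { intros x0. unfold continuity_pt, continue_in, limit1_in, limit_in.
    intros eps Heps.
    destruct (Hc (clamp a b x0) (clamp_in a b x0 Hab) eps Heps) as [d [Hd Hf]].
    exists d; split; [exact Hd|]. intros x [_ Hx]. simpl in *. unfold R_dist in *.
    unfold g. replace (f (clamp a b x) - v - (f (clamp a b x0) - v)) with
      (f (clamp a b x) - f (clamp a b x0)) by ring.
    apply Hf. apply clamp_in; exact Hab.
    eapply Rle_lt_trans; [apply clamp_lip; exact Hab| exact Hx]. }
  destruct (IVT_cor g a b Hg Hab) as [z [Hz Hgz]].
  { unfold g. rewrite !clamp_id by lra.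
    assert (f a - v <= 0) by lra. assert (0 <= f b - v) by lra. nra. }
  exists z; split; [exact Hz|]. unfold g in Hgz. rewrite clamp_id in Hgz by lra. lra.
Qed.


Lemma u_cl U e : uninorm U e -> forall x y, in01 x -> in01 y -> in01 (U x y).
Proof. intros (H0&H1&H2&H3&H4&H5); auto. Qed.
Lemma u_comm U e : uninorm U e -> forall x y, in01 x -> in01 y -> U x y = U y x.
Proof. intros (H0&H1&H2&H3&H4&H5); auto. Qed.
Lemma u_assoc U e : uninorm U e -> forall x y z, in01 x -> in01 y -> in01 z ->
  U x (U y z) = U (U x y) z.
Proof. intros (H0&H1&H2&H3&H4&H5); auto. Qed.
Lemma u_mono1 U e : uninorm U e -> forall x x' y, in01 x -> in01 x' -> in01 y -> x <= x' ->
  U x y <= U x' y.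
Proof. intros (H0&H1&H2&H3&H4&H5); auto. Qed.
Lemma u_mono2 U e : uninorm U e -> forall y x x', in01 x -> in01 x' -> in01 y -> x <= x' ->
  U y x <= U y x'.
Proof. intros HU y x x' ? ? ? ?. rewrite (u_comm U e HU y x), (u_comm U e HU y x') by auto.
  apply (u_mono1 U e); auto. Qed.
Lemma u_neut U e : uninorm U e -> forall x, in01 x -> U e x = x.
Proof. intros (H0&H1&H2&H3&H4&H5); auto. Qed.
Lemma u_neutr U e : uninorm U e -> forall x, in01 x -> U x e = x.
Proof. intros HU x Hx. rewrite (u_comm U e HU) by (auto; destruct HU; auto).
  apply (u_neut U e HU); auto. Qed.
Lemma u_e01 U e : uninorm U e -> in01 e.
Proof. intros (H0&_); auto. Qed.

Lemma T_IVT U e : Hyp U e -> forall a v, 0 <= a <= e -> 0 <= v <= a ->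
  exists w, 0 <= w <= e /\ U a w = v.
Proof.
  intros [HU [He [HT HC]]] a v Ha Hv.
  assert (Hi : forall z, 0 <= z <= e -> in01 z) by (intros; unfold in01; lra).
  destruct (IVT_rel (fun w => U a w) 0 e v) as [c [Hc Hfc]].
  - lra.
  - intros x0 Hx0. apply HT; auto.
  - simpl. split.
    + assert (U a 0 <= U e 0) by (apply (u_mono1 U e HU); auto; unfold in01; lra).
      rewrite (u_neut U e HU) in H by (unfold in01; lra).
      assert (in01 (U a 0)) by (apply (u_cl U e HU); auto; unfold in01; lra).
      unfold in01 in H0; lra.
    + rewrite (u_neutr U e HU) by auto. lra.
  - exists c; auto.
Qed.

Lemma mono_darboux f a b t : a <= t < b -> (forall x x', a<=x -> x<=x' -> x'<=b -> f x <= f x') ->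
  (forall v, f a <= v <= f b -> exists c, a<=c<=b /\ f c = v) -> cont_rel f a b t.
Proof.
  intros Ht Hm Hd eps Heps.
  assert (Hr : exists dr, dr > 0 /\ forall x, t <= x <= b -> x - t < dr -> f x < f t + eps).
  { destruct (Rle_dec (f t + eps/2) (f b)) as [Hle|Hgt].
    - destruct (Hd (f t + eps/2)) as [c [Hc Hfc]].
      { split; [|lra]. assert (f a <= f t) by (apply Hm; lra). lra. }
      assert (t < c).
      { destruct (Rlt_or_le t c) as [|Hct]; auto.
        assert (f c <= f t) by (apply Hm; lra). lra. }
      exists (c - t); split; [lra|]. intros x Hx Hxt.
      assert (f x <= f c) by (apply Hm; lra). lra.
    - exists (b - t + 1); split; [lra|]. intros x Hx _.
      assert (f x <= f b) by (apply Hm; lra). lra. }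
  assert (Hl : exists dl, dl > 0 /\ forall x, a <= x <= t -> t - x < dl -> f t - eps < f x).
  { destruct (Rle_dec (f a) (f t - eps/2)) as [Hle|Hgt].
    - destruct (Hd (f t - eps/2)) as [c [Hc Hfc]].
      { split; [lra|]. assert (f t <= f b) by (apply Hm; lra). lra. }
      assert (c < t).
      { destruct (Rlt_or_le c t) as [|Hct]; auto.
        assert (f t <= f c) by (apply Hm; lra). lra. }
      exists (t - c); split; [lra|]. intros x Hx Hxt.
      assert (f c <= f x) by (apply Hm; lra). lra.
    - exists 1; split; [lra|]. intros x Hx _.
      assert (f a <= f x) by (apply Hm; lra). lra. }
  destruct Hr as [dr [Hdr Hr]]. destruct Hl as [dl [Hdl Hl]].
  exists (Rmin dr dl); split; [apply Rmin_glb_lt; lra|].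
  intros x Hx Hxd. apply abs_lt_inv in Hxd.
  assert (Rmin dr dl <= dr) by apply Rmin_l. assert (Rmin dr dl <= dl) by apply Rmin_r.
  apply abs_lt.
  destruct (Rle_dec t x).
  - assert (f t <= f x) by (apply Hm; lra). assert (f x < f t + eps) by (apply Hr; lra). lra.
  - assert (f x <= f t) by (apply Hm; lra). assert (f t - eps < f x) by (apply Hl; lra). lra.
Qed.

Lemma claimA U e : Hyp U e -> forall p t0, in01 p -> in01 t0 -> U p t0 <= e ->
  forall ts, 0 <= ts < t0 -> continuous_at_in01 (u_ U p) ts.
Proof.
  intros HH p t0 Hp Ht0 Hle ts Hts.
  pose proof HH as [HU [He [HT HC]]].
  assert (Hi : forall z, 0 <= z <= 1 -> in01 z) by (intros; unfold in01; lra).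
  assert (Hc : cont_rel (u_ U p) 0 t0 ts).
  { apply mono_darboux; [lra| |].
    - intros x x' ? ? ?. unfold u_. apply (u_mono2 U e HU); auto; apply Hi; unfold in01 in Ht0; lra.
    - intros v Hv. unfold u_ in Hv.
      assert (in01 (U p 0)) by (apply (u_cl U e HU); auto; apply Hi; lra).
      assert (in01 (U p t0)) by (apply (u_cl U e HU); auto).
      destruct (T_IVT U e HH (U p t0) v) as [w [Hw Hw2]].
      { unfold in01 in *; lra. } { unfold in01 in *; lra. }
      exists (U t0 w). 
      assert (in01 w) by (apply Hi; lra).
      assert (in01 (U t0 w)) by (apply (u_cl U e HU); auto).
      split.
      + split; [unfold in01 in *; lra|].
        assert (U t0 w <= U t0 e) by (apply (u_mono2 U e HU); auto; [apply Hi; lra | lra]).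
        rewrite (u_neutr U e HU) in H3 by auto. lra.
      + unfold u_. rewrite (u_assoc U e HU) by auto. exact Hw2. }
  intros eps Heps. destruct (Hc eps Heps) as [d [Hd Hf]].
  exists (Rmin d (t0 - ts)); split; [apply Rmin_glb_lt; lra|].
  intros z Hz Hzd.
  assert (Rmin d (t0 - ts) <= d) by apply Rmin_l. assert (Rmin d (t0 - ts) <= t0 - ts) by apply Rmin_r.
  apply abs_lt_inv in Hzd.
  apply Hf; [unfold in01 in Hz; lra| apply abs_lt; lra].
Qed.

Definition dualU (U : R -> R -> R) : R -> R -> R := fun a b => 1 - U (1 - a) (1 - b).

Lemma in01_1m x : in01 x -> in01 (1 - x).
Proof. unfold in01; lra. Qed.

Lemma dual_uninorm U e : uninorm U e -> uninorm (dualU U) (1 - e).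
Proof.
  intros HU. pose proof HU as (H0&H1&H2&H3&H4&H5). unfold dualU.
  split; [unfold in01 in *; lra|]. split; [|split; [|split; [|split]]].
  - intros x y Hx Hy. pose proof (H1 (1-x) (1-y) (in01_1m _ Hx) (in01_1m _ Hy)). unfold in01 in *; lra.
  - intros x y Hx Hy. rewrite H2; auto using in01_1m.
  - intros x y z Hx Hy Hz.
    replace (1 - (1 - U (1 - y) (1 - z))) with (U (1 - y) (1 - z)) by ring.
    replace (1 - (1 - U (1 - x) (1 - y))) with (U (1 - x) (1 - y)) by ring.
    rewrite H3; auto using in01_1m.
  - intros x x' y Hx Hx' Hy Hxx.
    assert (U (1-x') (1-y) <= U (1-x) (1-y)) by (apply H4; auto using in01_1m; lra). lra.
  - intros x Hx. replace (1 - (1 - e)) with e by ring. rewrite H5 by auto using in01_1m. ring.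
Qed.

Lemma dual_hyp U e : Hyp U e -> Hyp (dualU U) (1 - e).
Proof.
  intros [HU [He [HT HC]]]. split; [apply dual_uninorm; auto|]. split; [lra|]. split.
  - intros a w0 Ha Hw0 eps Heps.
    destruct (HC (1-a) (1-w0) ltac:(lra) ltac:(lra) eps Heps) as [d [Hd Hf]].
    exists d; split; auto. intros x Hx Hxd. unfold dualU.
    pose proof (Hf (1 - x) ltac:(lra) ltac:(rewrite <- Rabs_Ropp; replace (-(1-x-(1-w0))) with (x - w0) by ring; exact Hxd)).
    simpl in H. rewrite <- Rabs_Ropp. replace (- (1 - U (1 - a) (1 - x) - (1 - U (1 - a) (1 - w0)))) with
      (U (1 - a) (1 - x) - U (1 - a) (1 - w0)) by ring. exact H.
  - intros a w0 Ha Hw0 eps Heps.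
    destruct (HT (1-a) (1-w0) ltac:(lra) ltac:(lra) eps Heps) as [d [Hd Hf]].
    exists d; split; auto. intros x Hx Hxd. unfold dualU.
    pose proof (Hf (1 - x) ltac:(lra) ltac:(rewrite <- Rabs_Ropp; replace (-(1-x-(1-w0))) with (x - w0) by ring; exact Hxd)).
    simpl in H. rewrite <- Rabs_Ropp. replace (- (1 - U (1 - a) (1 - x) - (1 - U (1 - a) (1 - w0)))) with
      (U (1 - a) (1 - x) - U (1 - a) (1 - w0)) by ring. exact H.
Qed.

Lemma dual_cont U x y : continuous_at_in01 (u_ (dualU U) (1 - x)) (1 - y) ->
  continuous_at_in01 (u_ U x) y.
Proof.
  intros Hc eps Heps. destruct (Hc eps Heps) as [d [Hd Hf]].
  exists d; split; auto. intros z Hz Hzd.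
  pose proof (Hf (1 - z) (in01_1m _ Hz) ltac:(rewrite <- Rabs_Ropp; replace (-(1-z-(1-y))) with (z - y) by ring; exact Hzd)).
  unfold u_, dualU in H. replace (1 - (1 - x)) with x in H by ring.
  replace (1 - (1 - z)) with z in H by ring. replace (1 - (1 - y)) with y in H by ring.
  unfold u_. rewrite <- Rabs_Ropp. replace (- (U x z - U x y)) with (1 - U x z - (1 - U x y)) by ring. exact H.
Qed.

Lemma C_IVT U e : Hyp U e -> forall a v, e <= a <= 1 -> a <= v <= 1 ->
  exists s, e <= s <= 1 /\ U a s = v.
Proof.
  intros HH a v Ha Hv. pose proof HH as [HU [He _]].
  destruct (T_IVT (dualU U) (1 - e) (dual_hyp U e HH) (1 - a) (1 - v)) as [w [Hw Hw2]]; try lra.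
  exists (1 - w); split; [lra|]. unfold dualU in Hw2. replace (1 - (1 - a)) with a in Hw2 by ring. lra.
Qed.

Lemma claimB U e : Hyp U e -> forall p t0, in01 p -> in01 t0 -> e <= U p t0 ->
  forall ts, t0 < ts <= 1 -> continuous_at_in01 (u_ U p) ts.
Proof.
  intros HH p t0 Hp Ht0 Hle ts Hts.
  apply dual_cont. apply (claimA (dualU U) (1 - e) (dual_hyp U e HH) (1 - p) (1 - t0)).
  - apply in01_1m; auto.
  - apply in01_1m; auto.
  - unfold dualU. replace (1 - (1 - p)) with p by ring. replace (1 - (1 - t0)) with t0 by ring. lra.
  - lra.
Qed.

Lemma thr U e : Hyp U e -> forall p y, in01 p -> in01 y -> ~ continuous_at_in01 (u_ U p) y ->
  (forall t, in01 t -> y < t -> e < U p t) /\ (forall t, in01 t -> t < y -> U p t < e).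
Proof.
  intros HH p y Hp Hy Hnc. split.
  - intros t Ht Hyt. destruct (Rlt_or_le e (U p t)) as [|Hle]; auto. exfalso; apply Hnc.
    apply (claimA U e HH p t Hp Ht Hle). unfold in01 in Hy; lra.
  - intros t Ht Hyt. destruct (Rlt_or_le (U p t) e) as [|Hle]; auto. exfalso; apply Hnc.
    apply (claimB U e HH p t Hp Ht Hle). unfold in01 in Hy; lra.
Qed.

Lemma core U e : Hyp U e -> forall x1 x2 y, in01 x1 -> in01 x2 -> in01 y -> x1 < x2 -> y < e ->
  ~ continuous_at_in01 (u_ U x1) y -> ~ continuous_at_in01 (u_ U x2) y -> U y y = y.
Proof.
  intros HH p p' y Hp Hp' Hy Hpp Hye Hn1 Hn2.
  pose proof HH as [HU [He [HT HC]]].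
  assert (Hi : forall z, 0 <= z <= 1 -> in01 z) by (intros; unfold in01; lra).
  assert (He01 : in01 e) by (apply Hi; lra).
  destruct (thr U e HH p y Hp Hy Hn1) as [Hg1 Hl1].
  destruct (thr U e HH p' y Hp' Hy Hn2) as [Hg2 Hl2].
  assert (Hcl : forall a b, in01 a -> in01 b -> in01 (U a b)) by (apply (u_cl U e HU)).
  assert (Hpe : e < p).
  { rewrite <- (u_neutr U e HU p Hp). apply Hg1; auto. }
  assert (HUyy_le : U y y <= y).
  { assert (U y y <= U y e) by (apply (u_mono2 U e HU); auto; unfold in01 in *; lra).
    rewrite (u_neutr U e HU) in H by auto. lra. }
  destruct (Req_dec (U y y) y) as [|Hneq]; auto. exfalso.
  assert (HUyy : U y y < y) by lra.
  assert (Hy0 : 0 < y) by (assert (in01 (U y y)) by auto; unfold in01 in *; lra).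
  assert (S2 : forall t1 t2, 0 <= t1 -> t1 < t2 -> t2 < y -> U p' t1 <= U p t2).
  { intros t1 t2 H1 H2 H3.
    destruct (T_IVT U e HH y ((t1+t2)/2)) as [w [Hw Hyw]]; try lra.
    assert (Hwi : in01 w) by (apply Hi; lra).
    destruct (HT w y Hw ltac:(lra) ((t2-t1)/2) ltac:(lra)) as [d [Hd Hf]].
    simpl in Hf.
    assert (Hwy : U w y = (t1+t2)/2) by (rewrite (u_comm U e HU) by auto; exact Hyw).
    set (s := Rmax 0 (y - d/2)).
    assert (Hs : 0 <= s <= e /\ s < y /\ Rabs (s - y) < d)
      by (unfold s, Rmax; destruct Rle_dec; split_Rabs; lra).
    set (z := Rmin e (y + d/2)).
    assert (Hz : 0 <= z <= e /\ y < z /\ Rabs (z - y) < d)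
      by (unfold z, Rmin; destruct Rle_dec; split_Rabs; lra).
    assert (Hsi : in01 s) by (apply Hi; lra). assert (Hzi : in01 z) by (apply Hi; lra).
    pose proof (abs_lt_inv _ _ (Hf s ltac:(lra) ltac:(lra))) as Hs2.
    pose proof (abs_lt_inv _ _ (Hf z ltac:(lra) ltac:(lra))) as Hz2.
    rewrite Hwy in Hs2, Hz2.
    assert (A1 : U p' t1 <= U p' (U w s)) by (apply (u_mono2 U e HU); auto; [apply Hi; lra | lra]).
    rewrite (u_comm U e HU w s), (u_assoc U e HU) in A1 by auto.
    assert (A2 : U (U p' s) w <= U e w) by (apply (u_mono1 U e HU); auto; left; apply Hl2; auto; lra).
    rewrite (u_neut U e HU) in A2 by auto.
    assert (B1 : U p (U w z) <= U p t2) by (apply (u_mono2 U e HU); auto; [apply Hi; lra | lra]).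
    rewrite (u_comm U e HU w z), (u_assoc U e HU) in B1 by auto.
    assert (B2 : U e w <= U (U p z) w) by (apply (u_mono1 U e HU); auto; left; apply Hg1; auto; lra).
    rewrite (u_neut U e HU) in B2 by auto.
    lra. }
  assert (S3 : forall t, 0 <= t < y -> U p' t = U p t).
  { intros t Ht. assert (Hti : in01 t) by (apply Hi; lra).
    assert (U p t <= U p' t) by (apply (u_mono1 U e HU); auto; lra).
    destruct (Req_dec (U p' t) (U p t)) as [|Hne]; auto. exfalso.
    assert (Hc : continuous_at_in01 (u_ U p) t).
    { apply (claimA U e HH p ((t+y)/2) Hp ltac:(apply Hi; lra)); [|lra].
      left; apply Hl1; [apply Hi; lra| lra]. }
    destruct (Hc (U p' t - U p t) ltac:(lra)) as [d [Hd Hf]].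
    set (t2 := Rmin ((t+y)/2) (t + d/2)).
    assert (Ht2 : t < t2 < y /\ Rabs (t2 - t) < d)
      by (unfold t2, Rmin; destruct Rle_dec; split_Rabs; lra).
    pose proof (abs_lt_inv _ _ (Hf t2 ltac:(apply Hi; lra) ltac:(lra))) as Hf2. unfold u_ in Hf2.
    pose proof (S2 t t2 ltac:(lra) ltac:(lra) ltac:(lra)). lra. }
  destruct (HT y y ltac:(lra) ltac:(lra) (y - U y y) ltac:(lra)) as [d [Hd Hf]]. simpl in Hf.
  set (w0 := Rmin e (y + d/2)).
  assert (Hw0 : 0 <= w0 <= e /\ y < w0 /\ Rabs (w0 - y) < d)
    by (unfold w0, Rmin; destruct Rle_dec; split_Rabs; lra).
  assert (Hw0i : in01 w0) by (apply Hi; lra).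
  pose proof (abs_lt_inv _ _ (Hf w0 ltac:(lra) ltac:(lra))) as Hyw0.
  assert (Hyw0i : in01 (U y w0)) by auto.
  set (t := (U y w0 + y)/2).
  assert (Ht : 0 <= t < y) by (unfold t; unfold in01 in Hyw0i; lra).
  assert (Hti : in01 t) by (apply Hi; lra).
  destruct (HT w0 y ltac:(lra) ltac:(lra) (t - U w0 y)) as [d' [Hd' Hf']].
  { rewrite (u_comm U e HU) by auto. unfold t; lra. }
  simpl in Hf'.
  set (z := Rmin e (y + d'/2)).
  assert (Hz : 0 <= z <= e /\ y < z /\ Rabs (z - y) < d')
    by (unfold z, Rmin; destruct Rle_dec; split_Rabs; lra).
  assert (Hzi : in01 z) by (apply Hi; lra).
  pose proof (abs_lt_inv _ _ (Hf' z ltac:(lra) ltac:(lra))) as Hw0z.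
  set (m := U p t).
  assert (Hm1 : y < m).
  { assert (A : U p (U w0 z) <= m) by (apply (u_mono2 U e HU); auto; lra).
    rewrite (u_comm U e HU w0 z), (u_assoc U e HU) in A by auto.
    assert (B : U e w0 <= U (U p z) w0) by (apply (u_mono1 U e HU); auto; left; apply Hg1; auto; lra).
    rewrite (u_neut U e HU) in B by auto. lra. }
  assert (Hm2 : m < e) by (apply Hl1; auto; lra).
  assert (Hmi : in01 m) by (apply Hi; unfold in01 in *; lra).
  destruct (C_IVT U e HH p p') as [s0 [Hs0 Hps0]]; try (unfold in01 in *; lra).
  assert (Hs0i : in01 s0) by (apply Hi; lra).
  assert (Hsm : U s0 m = m).
  { unfold m. rewrite (u_assoc U e HU) by auto. rewrite (u_comm U e HU s0 p) by auto.
    rewrite Hps0. apply S3; lra. }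
  set (q := U p m).
  assert (Hq1 : e < q) by (apply Hg1; auto).
  assert (Hq2 : q <= p).
  { assert (U p m <= U p e) by (apply (u_mono2 U e HU); auto; lra).
    rewrite (u_neutr U e HU) in H by auto. exact H. }
  assert (Hqi : in01 q) by (apply Hi; unfold in01 in *; lra).
  assert (Hsq : U s0 q = q).
  { unfold q. rewrite (u_comm U e HU p m) by auto. rewrite (u_assoc U e HU) by auto.
    rewrite Hsm. reflexivity. }
  destruct (C_IVT U e HH q p) as [s [Hs Hqs]]; try (unfold in01 in *; lra).
  assert (Hsi : in01 s) by (apply Hi; lra).
  assert (U s0 p = p).
  { rewrite <- Hqs. rewrite (u_assoc U e HU) by auto. rewrite Hsq. reflexivity. }
  rewrite (u_comm U e HU) in H by auto. lra.
Qed.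

Lemma div_abs_lt k a c : k > 0 -> Rabs a < c * k -> Rabs (a / k) < c.
Proof.
  intros Hk H. apply abs_lt_inv in H. apply abs_lt. split.
  - apply (Rmult_lt_reg_r k); auto. unfold Rdiv. rewrite Rmult_assoc, Rinv_l by lra. lra.
  - apply (Rmult_lt_reg_r k); auto. unfold Rdiv. rewrite Rmult_assoc, Rinv_l by lra. lra.
Qed.
Lemma div_abs_lt_inv k a c : k > 0 -> Rabs (a / k) < c -> Rabs a < c * k.
Proof.
  intros Hk H. apply abs_lt_inv in H. apply abs_lt.
  replace a with ((a / k) * k) by (field; lra). split; nra.
Qed.

Lemma div01 a k : k > 0 -> 0 <= a <= k -> 0 <= a / k <= 1.
Proof.
  intros Hk [H1 H2]. assert (0 < / k) by (apply Rinv_0_lt_compat; lra).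
  unfold Rdiv. split; [nra|]. replace 1 with (k * / k) by (field; lra). nra.
Qed.
Lemma divpos a k : k > 0 -> a > 0 -> a / k > 0.
Proof. intros. assert (0 < / k) by (apply Rinv_0_lt_compat; lra). unfold Rdiv; nra. Qed.

Lemma class_hyp U e : uninorm U e -> 0 < e < 1 -> in_class_U U e -> Hyp U e.
Proof.
  intros HU He [HTn HCn]. split; [auto|]. split; [auto|]. split.
  - intros a w0 Ha Hw0 eps Heps.
    destruct (HTn (a/e) (w0/e)) with (eps := eps / e) as [dl [Hdl Hf]].
    { apply div01; lra. }
    { apply div01; lra. }
    { apply divpos; lra. }
    exists (dl * e); split; [nra|]. intros w Hw Hwd.
    assert (HH := Hf (a/e) (w/e)).
    unfold underlying_tnorm in HH.
    replace (e * (a/e)) with a in HH by (field; lra).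
    replace (e * (w/e)) with w in HH by (field; lra).
    replace (e * (w0/e)) with w0 in HH by (field; lra).
    replace (U a w / e - U a w0 / e) with ((U a w - U a w0)/e) in HH by (field; lra).
    apply div_abs_lt_inv in HH; [| lra | | | |].
    + replace (eps / e * e) with eps in HH by (field; lra). exact HH.
    + apply div01; lra.
    + apply div01; lra.
    + replace (a/e - a/e) with 0 by ring. rewrite Rabs_R0; lra.
    + replace (w/e - w0/e) with ((w - w0)/e) by (field; lra). apply div_abs_lt; lra.
  - intros a s0 Ha Hs0 eps Heps.
    set (k := 1 - e). assert (Hk : k > 0) by (unfold k; lra).
    destruct (HCn ((a-e)/k) ((s0-e)/k)) with (eps := eps / k) as [dl [Hdl Hf]].
    { apply div01; unfold k in *; lra. }
    { apply div01; unfold k in *; lra. }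
    { apply divpos; lra. }
    exists (dl * k); split; [nra|]. intros w Hw Hwd.
    assert (HH := Hf ((a-e)/k) ((w-e)/k)).
    unfold underlying_tconorm in HH. fold k in HH.
    replace (e + k * ((a-e)/k)) with a in HH by (field; lra).
    replace (e + k * ((w-e)/k)) with w in HH by (field; lra).
    replace (e + k * ((s0-e)/k)) with s0 in HH by (field; lra).
    replace ((U a w - e) / k - (U a s0 - e) / k) with ((U a w - U a s0)/k) in HH by (field; lra).
    apply div_abs_lt_inv in HH; [| lra | | | |].
    + replace (eps / k * k) with eps in HH by (field; lra). exact HH.
    + apply div01; unfold k in *; lra.
    + apply div01; unfold k in *; lra.
    + replace ((a-e)/k - (a-e)/k) with 0 by ring. rewrite Rabs_R0; lra.
    + replace ((w-e)/k - (s0-e)/k) with ((w - s0)/k) by (field; lra). apply div_abs_lt; lra.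
Qed.

Theorem proposition17 (U : R -> R -> R) (e : R) :
  uninorm U e -> 0 < e < 1 -> in_class_U U e ->
  forall x1 x2 y, in01 x1 -> in01 x2 -> in01 y -> x1 < x2 ->
    ~ continuous_at_in01 (u_ U x1) y ->
    ~ continuous_at_in01 (u_ U x2) y ->
    idempotent U y.
Proof.
  intros HU He HC x1 x2 y H1 H2 Hy H12 Hn1 Hn2.
  assert (HH := class_hyp U e HU He HC). unfold idempotent.
  destruct (Rtotal_order y e) as [Hlt|[Heq|Hgt]].
  - apply (core U e HH x1 x2 y); auto.
  - rewrite Heq. apply (u_neut U e HU). rewrite <- Heq. auto.
  - assert (Hd := core (dualU U) (1 - e) (dual_hyp U e HH) (1 - x2) (1 - x1) (1 - y)
      (in01_1m _ H2) (in01_1m _ H1) (in01_1m _ Hy) ltac:(lra) ltac:(lra)).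
    unfold dualU in Hd. replace (1 - (1 - y)) with y in Hd by ring.
    assert (U y y = y); [|auto].
    cut (1 - U y y = 1 - y); [lra|]. apply Hd.
    + intro Hc. apply Hn2. apply dual_cont. exact Hc.
    + intro Hc. apply Hn1. apply dual_cont. exact Hc.
Qed.
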